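(* Let $\mathcal V$ be a congruence class and $\mathcal F$ a fragment of MSO such that for every finite alphabet $\Sigma$, a language $L\subseteq\Sigma^*$ is definable by an $\mathcal F$-sentence over $\Sigma$ if and only if it is recognized by a congruence in $\mathcal V(\Sigma)$. Assume moreover that $\mathcal F$ satisfies: (1) for every alphabet $\Sigma$, a set $P$ of pointed words over $\Sigma$ is defined by an $\mathcal F_{\mathsf c}$-sentence over $\Sigma$ iff the language $\{\mathrm{enc}(w,i):(w,i)\in P\}$ over $\Sigma\uplus\dot\Sigma$ is definable by an $\mathcal F$-sentence over $\Sigma\uplus\dot\Sigma$; (2) a language over $\Sigma$ is definable by an $\mathcal F$-sentence over $\Sigma$ iff it is definable by an $\mathcal F$-sentence over any alphabet $\Sigma\cup\Gamma\supseteq\Sigma$; (3) for any $\mathcal F$-definable languages $L_1,L_2\subseteq\Sigma^*$ and a fresh letter $\sharp\notin\Sigma$, the language $L_1\sharp L_2$ is $\mathcal F$-definable over $\Sigma\uplus\{\sharp\}$; (4) $\{\varepsilon\}$ is $\mathcal F$-definable. Then a transduction $f:\Sigma^+\to\Sigma^*$ is $\mathcal V$-rational if and only if it is $\mathcal F$-definable (by an $\mathcal F$-transducer).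
   Context: Words are logical structures over the signature $\{(\sigma(x))_{\sigma\in\Sigma},x<y\}$ (domain = positions, $\sigma$ = positions labelled $\sigma$, $<$ the order). MSO formulas: $\phi::=\exists X\phi\mid\exists x\phi\mid\phi\wedge\phi\mid\neg\phi\mid x\in X\mid\sigma(x)\mid x<y$ (and $x=y$). A logical fragment $\mathcal F$ is a subset of MSO formulas; an $\mathcal F$-language is one defined by an $\mathcal F$-sentence. A pointed word is a pair $(w,i)$ with $w$ non-empty and $i$ a position of $w$; it is a structure over the signature extended by a constant $\mathsf c$ interpreted as $i$. $\mathcal F_{\mathsf c}$ is the set of formulas obtained from $\mathcal F$-formulas by replacing some occurrences of first-order variables inside atomic predicates by $\mathsf c$. $\dot\Sigma=\{\dot\sigma:\sigma\in\Sigma\}$ is a disjoint copy of $\Sigma$ and $\mathrm{enc}(w,i)$ is $w$ with its $i$-th letter replaced by its dotted copy. An $\mathcal F$-transducer over $\Sigma$ is a tuple $(K,\phi_{\mathrm{dom}},(\psi_v)_{v\in K})$ with $K$ a finite set of words, $\phi_{\mathrm{dom}}$ an $\mathcal F$-sentence and each $\psi_v$ an $\mathcal F_{\mathsf c}$-sentence; for a non-empty $u$ satisfying $\phi_{\mathrm{dom}}$ its output is $v_1\cdots v_{|u|}$ where $(u,i)\models\psi_{v_i}$ (assumed well-defined and functional, i.e. exactly one such $v_i$ for each $i$); $f:\Sigma^+\to\Sigma^*$ is $\mathcal F$-definable if some $\mathcal F$-transducer defines it. A congruence class $\mathcal V$ assigns to each alphabet a set of finite-index congruences closed under intersection and coarser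 congruences; $f$ is $\mathcal V$-rational if realized by a functional transducer (automaton with output words on transitions, initial and final states) whose underlying automaton $\mathcal A$ has transition congruence $\approx_{\mathcal A}$ ($u\approx v$ iff for all states $p,q$, runs $p\xrightarrow{u}q$ exist iff runs $p\xrightarrow{v}q$ exist) in $\mathcal V(\Sigma)$. *)

(* Defs.v *)
From mathcomp Require Import all_boot.
Set Implicit Arguments. Unset Strict Implicit. Unset Printing Implicit Defensive.

Inductive term := TVar of nat | TCst.

(* MSO formulas; second-order variables are named by nats (separate namespace). *)
Inductive form (S : Type) :=
| FExSO of nat & form S
| FExFO of nat & form S
| FAnd of form S & form S
| FNot of form S
| FIn of term & nat
| FLet of S & term
| FLt of term & term
| FEq of term & term.

Arguments FIn {S}. Arguments FLet {S}. Arguments FLt {S}. Arguments FEq {S}.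

Definition tvar_is (x : nat) (t : term) : bool :=
  if t is TVar y then y == x else false.

Fixpoint fo_free (x : nat) S (phi : form S) : bool :=
  match phi with
  | FExSO _ p => fo_free x p
  | FExFO y p => (y != x) && fo_free x p
  | FAnd p q => fo_free x p || fo_free x q
  | FNot p => fo_free x p
  | FIn t _ => tvar_is x t
  | FLet _ t => tvar_is x t
  | FLt t1 t2 | FEq t1 t2 => tvar_is x t1 || tvar_is x t2
  end.

Fixpoint so_free (X : nat) S (phi : form S) : bool :=
  match phi with
  | FExSO Y p => (Y != X) && so_free X p
  | FExFO _ p => so_free X p
  | FAnd p q => so_free X p || so_free X q
  | FNot p => so_free X p
  | FIn _ Y => Y == X
  | _ => false
  end.

Definition closed S (phi : form S) : Prop :=
  forall n, ~~ fo_free n phi /\ ~~ so_free n phi.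

Definition tcfree (t : term) : bool := if t is TCst then false else true.

Fixpoint cfree S (phi : form S) : bool :=
  match phi with
  | FExSO _ p | FExFO _ p | FNot p => cfree p
  | FAnd p q => cfree p && cfree q
  | FIn t _ | FLet _ t => tcfree t
  | FLt t1 t2 | FEq t1 t2 => tcfree t1 && tcfree t2
  end.

Definition trepl (t t' : term) : Prop :=
  t' = t \/ (exists x, t = TVar x) /\ t' = TCst.

Fixpoint crepl S (phi psi : form S) : Prop :=
  match phi, psi with
  | FExSO X p, FExSO Y q => X = Y /\ crepl p q
  | FExFO x p, FExFO y q => x = y /\ crepl p q
  | FAnd p1 p2, FAnd q1 q2 => crepl p1 q1 /\ crepl p2 q2
  | FNot p, FNot q => crepl p q
  | FIn t X, FIn t' Y => trepl t t' /\ X = Y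
  | FLet a t, FLet b t' => a = b /\ trepl t t'
  | FLt t1 t2, FLt t1' t2' => trepl t1 t1' /\ trepl t2 t2'
  | FEq t1 t2, FEq t1' t2' => trepl t1 t1' /\ trepl t2 t2'
  | _, _ => False
  end.

(* positions of w are 0 .. size w - 1; c is interpreted as the nat [c];
   nu / mu are first / second-order valuations *)
Definition tval (c : nat) (nu : nat -> nat) (t : term) : nat :=
  if t is TVar x then nu x else c.

Definition upd (A : Type) (f : nat -> A) (x : nat) (a : A) : nat -> A :=
  fun y => if y == x then a else f y.

Fixpoint eval S (w : seq S) (c : nat) (nu : nat -> nat) (mu : nat -> nat -> Prop)
  (phi : form S) : Prop :=
  match phi with
  | FExSO X p => exists P : nat -> Prop,
      (forall i, P i -> i < size w) /\ eval w c nu (upd mu X P) p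
  | FExFO x p => exists i, i < size w /\ eval w c (upd nu x i) mu p
  | FAnd p q => eval w c nu mu p /\ eval w c nu mu q
  | FNot p => ~ eval w c nu mu p
  | FIn t X => mu X (tval c nu t)
  | FLet a t => onth w (tval c nu t) = Some a
  | FLt t1 t2 => tval c nu t1 < tval c nu t2
  | FEq t1 t2 => tval c nu t1 = tval c nu t2
  end.

Definition sat S (w : seq S) (phi : form S) : Prop :=
  eval w 0 (fun _ => 0) (fun _ _ => False) phi.

Definition psat S (w : seq S) (i : nat) (phi : form S) : Prop :=
  eval w i (fun _ => 0) (fun _ _ => False) phi.

Definition fragment := forall S : finType, form S -> Prop.

Definition Fsent (F : fragment) (S : finType) (phi : form S) : Prop :=
  F S phi /\ cfree phi /\ closed phi.

Definition Fcsent (F : fragment) (S : finType) (psi : form S) : Prop :=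
  (exists phi, F S phi /\ cfree phi /\ crepl phi psi) /\ closed psi.

Definition Fdef (F : fragment) (S : finType) (L : seq S -> Prop) : Prop :=
  exists phi, Fsent F phi /\ forall w, L w <-> sat w phi.

(* enc(w,i) over S + S (inr = dotted copy) *)
Definition enc (S : Type) (w : seq S) (i : nat) : seq (S + S) :=
  map (fun p : nat * S => if p.1 == i then inr p.2 else inl p.2)
      (zip (iota 0 (size w)) w).

Definition enc_lang (S : Type) (P : seq S -> nat -> Prop) : seq (S + S) -> Prop :=
  fun u => exists w i, P w i /\ u = enc w i.

(* L1 # L2 over option S, with # = None *)
Definition sharp_lang (S : Type) (L1 L2 : seq S -> Prop) : seq (option S) -> Prop :=
  fun u => exists u1 u2, L1 u1 /\ L2 u2 /\
             u = map Some u1 ++ None :: map Some u2.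

Definition is_fi_cong (S : Type) (r : seq S -> seq S -> Prop) : Prop :=
  [/\ (forall u, r u u), (forall u v, r u v -> r v u),
      (forall u v w, r u v -> r v w -> r u w),
      (forall u v x y, r u v -> r (x ++ u ++ y) (x ++ v ++ y)) &
      (exists n (rep : 'I_n -> seq S), forall u, exists k, r u (rep k))].

Definition congclass := forall S : finType, (seq S -> seq S -> Prop) -> Prop.

Definition is_cong_class (V : congclass) : Prop :=
  forall S : finType,
  [/\ (forall r, V S r -> is_fi_cong r),
      (forall r1 r2, V S r1 -> V S r2 -> V S (fun u v => r1 u v /\ r2 u v)) &
      (forall r1 r2, V S r1 -> is_fi_cong r2 -> (forall u v, r1 u v -> r2 u v) ->
                     V S r2)].

Definition recognizes (S : Type) (r : seq S -> seq S -> Prop) (L : seq S -> Prop) :=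
  forall u v, r u v -> (L u <-> L v).

Record transducer (S : finType) := Transducer {
  tstate : finType;
  ttrans : seq (tstate * S * seq S * tstate);
  tinit : pred tstate;
  tfinal : pred tstate }.
Arguments tinit {S} t _ : rename.
Arguments tfinal {S} t _ : rename.
Arguments ttrans {S} t : rename.

Fixpoint run (S : finType) (T : transducer S) (p : tstate T) (u : seq S)
  (q : tstate T) (o : seq S) : Prop :=
  match u with
  | [::] => p = q /\ o = [::]
  | a :: u' => exists r o1 o2,
      (p, a, o1, r) \in ttrans T /\ run r u' q o2 /\ o = o1 ++ o2
  end.

Definition accepts (S : finType) (T : transducer S) (u o : seq S) : Prop :=
  exists p q, tinit T p /\ tfinal T q /\ run p u q o.

Definition functional (S : finType) (T : transducer S) : Prop :=
  forall u o1 o2, accepts T u o1 -> accepts T u o2 -> o1 = o2.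

(* f : S^+ -> S^* (partial) is realized by T (only non-empty inputs matter) *)
Definition realizes (S : finType) (T : transducer S) (f : seq S -> option (seq S)) :=
  forall u, u <> [::] -> forall o, f u = Some o <-> accepts T u o.

Definition trans_cong (S : finType) (T : transducer S) (u v : seq S) : Prop :=
  forall p q : tstate T, (exists o, run p u q o) <-> (exists o, run p v q o).

Definition V_rational (V : congclass) (S : finType) (f : seq S -> option (seq S)) :=
  exists T : transducer S, [/\ functional T, realizes T f & V S (trans_cong T)].

Record Ftransducer (S : finType) := FTransducer {
  fK : seq (seq S);
  fdom : form S;
  fpsi : seq S -> form S }.

Definition Ftrans_valid (F : fragment) (S : finType) (T : Ftransducer S) : Prop :=
  Fsent F (fdom T) /\ forall v, v \in fK T -> Fcsent F (fpsi T v).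

Definition Ftrans_defines (S : finType) (T : Ftransducer S) (f : seq S -> option (seq S)) :=
  forall u, u <> [::] ->
    (sat u (fdom T) -> forall i, i < size u ->
       exists! v, v \in fK T /\ psat u i (fpsi T v)) /\
    (forall o, f u = Some o <->
       (sat u (fdom T) /\ exists vs : seq (seq S),
          [/\ size vs = size u, o = flatten vs &
              forall i, i < size u ->
                nth [::] vs i \in fK T /\ psat u i (fpsi T (nth [::] vs i))])).

Definition F_definable (F : fragment) (S : finType) (f : seq S -> option (seq S)) :=
  exists T : Ftransducer S, Ftrans_valid F T /\ Ftrans_defines T f.

(* Main.v *)
Require Import Defs.
From mathcomp Require Import all_boot.
From Stdlib Require Import Classical ClassicalEpsilon.
Module M1.
Local Set Implicit Arguments. Local Unset Strict Implicit.

Lemma catIl (T : Type) (s a b : seq T) : s ++ a = s ++ b -> a = b.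
Proof. by elim: s => //= x s IH [] /IH. Qed.

Lemma catIr (T : Type) (s a b : seq T) : a ++ s = b ++ s -> a = b.
Proof.
move=> E. have Hs : size a = size b.
  have := congr1 size E; rewrite !size_cat => H. by apply/eqP; rewrite -(eqn_add2r (size s)) H.
have := congr1 (take (size a)) E. by rewrite take_size_cat // Hs take_size_cat.
Qed.

Lemma prefix_cmp (T : Type) (a b c d : seq T) :
  a ++ c = b ++ d -> size a <= size b -> exists e, b = a ++ e.
Proof.
move=> E Hs. have := congr1 (take (size b)) E. rewrite [take _ (b ++ d)](@take_size_cat _ (size b)) // take_cat.
case: ltnP => H.
  by move: (leq_trans H Hs); rewrite ltnn.
by move=> <-; eexists.
Qed.

Definition cb (P : Prop) : bool := if excluded_middle_informative P then true else false.
Lemma cbP (P : Prop) : cb P <-> P.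
Proof. by rewrite /cb; case: excluded_middle_informative. Qed.

Section Runs.
Variable S : finType.
Variable T : transducer S.

Lemma run_cat (p q : tstate T) u v o :
  run p (u ++ v) q o <-> exists r o1 o2, run p u r o1 /\ run r v q o2 /\ o = o1 ++ o2.
Proof.
elim: u p o => [|a u IH] p o /=.
  split; first by move=> H; exists p, [::], o.
  by move=> [r [o1 [o2 [[-> ->] [H ->]]]]].
split.
  move=> [r [o1 [o2 [Ht [Hr ->]]]]]. have [r' [o3 [o4 [H1 [H2 ->]]]]] := (IH r o2).1 Hr.
  by exists r', (o1 ++ o3), o4; split; [exists r, o1, o3|]; rewrite ?catA.
move=> [r [o1 [o2 [[r' [o3 [o4 [Ht [Hr ->]]]]] [H2 ->]]]]].
exists r', o3, (o4 ++ o2); split => //; split; last by rewrite catA.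
by apply/IH; exists r, o4, o2.
Qed.

Lemma run_ex_cat (p q : tstate T) u v :
  (exists o, run p (u ++ v) q o) <-> exists r, (exists o, run p u r o) /\ (exists o, run r v q o).
Proof.
split.
  by move=> [o /run_cat [r [o1 [o2 [H1 [H2 _]]]]]]; exists r; split; [exists o1|exists o2].
by move=> [r [[o1 H1] [o2 H2]]]; exists (o1 ++ o2); apply/run_cat; exists r, o1, o2.
Qed.

Lemma trans_cong_fi : is_fi_cong (trans_cong T).
Proof.
split.
- by move=> u p q.
- by move=> u v H p q; split => /(H p q).
- by move=> u v w H1 H2 p q; split => [/(H1 p q)/(H2 p q)|/(H2 p q)/(H1 p q)].
- move=> u v x y H p q. rewrite !run_ex_cat.
  split=> [[r [Hx /run_ex_cat [r' [Hu Hy]]]]|[r [Hx /run_ex_cat [r' [Hu Hy]]]]];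
    exists r; split => //; apply/run_ex_cat; exists r'; split => //; by apply/(H r r').
- pose M (u : seq S) : {ffun tstate T * tstate T -> bool} :=
    [ffun pq => cb (exists o, run pq.1 u pq.2 o)].
  have ME u v : M u = M v -> trans_cong T u v.
    move=> E p q. have := congr1 (fun m : {ffun tstate T * tstate T -> bool} => m (p, q)) E.
    rewrite /M !ffunE /= => Hpq.
    by split=> H; apply/cbP; [rewrite -Hpq|rewrite Hpq]; apply/cbP.
  exists #|{ffun tstate T * tstate T -> bool}|.
  exists (fun k => match excluded_middle_informative (exists u, M u = enum_val k) with
          | left H => proj1_sig (constructive_indefinite_description _ H)
          | right _ => [::] end).
  move=> u. exists (enum_rank (M u)).
  case: excluded_middle_informative => [H|[]]; last by exists u; rewrite enum_rankK.
  case: (constructive_indefinite_description _ H) => v /= Hv.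
  by apply: ME; rewrite Hv enum_rankK.
Qed.
End Runs.

Lemma cong_cat (S : Type) (r : seq S -> seq S -> Prop) x x' y y' :
  is_fi_cong r -> r x x' -> r y y' -> r (x ++ y) (x' ++ y').
Proof.
move=> [_ _ Htr Hc _] Hx Hy.
apply: (Htr _ (x' ++ y)).
  by have := Hc _ _ [::] y Hx.
by have := Hc _ _ x' [::] Hy; rewrite !cats0.
Qed.

End M1.
Import M1.
Module M3.
Local Set Implicit Arguments. Local Unset Strict Implicit.

Section Enc.
Variable S : Type.

Definition gdot (i : nat) (p : nat * S) : S + S := if p.1 == i then inr p.2 else inl p.2.

Lemma gdot_inl i k (s : seq S) : i < k ->
  map (gdot i) (zip (iota k (size s)) s) = map inl s.
Proof.
elim: s k => [|b s IH] k //= Hik.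
rewrite /gdot /=. have -> : (k == i) = false by apply/negbTE; rewrite neq_ltn Hik orbT.
by rewrite IH // (ltn_trans Hik).
Qed.

Lemma gdot_split k (x : seq S) a y :
  map (gdot (k + size x)) (zip (iota k (size (x ++ a :: y))) (x ++ a :: y)) =
  map inl x ++ inr a :: map inl y.
Proof.
elim: x k => [|b x IH] k /=.
  by rewrite addn0 /gdot /= eqxx gdot_inl.
rewrite /gdot /=. have -> : (k == k + (size x).+1) = false.
  by apply/negbTE; rewrite neq_ltn addnS ltnS leq_addr.
by rewrite -addSnnS IH.
Qed.

Lemma enc_split (x : seq S) a y : enc (x ++ a :: y) (size x) = map inl x ++ inr a :: map inl y.
Proof. by rewrite /enc -(gdot_split 0) add0n. Qed.

Lemma split_at (w : seq S) i : i < size w -> exists x a y, w = x ++ a :: y /\ size x = i.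
Proof.
elim: w i => [|b w IH] [|i] //= H.
  by exists [::], b, w.
have [x [a [y [-> <-]]]] := IH i H. by exists (b :: x), a, y.
Qed.

Lemma inl_cat_inj (x x' : seq S) a a' (Y Y' : seq (S + S)) :
  map inl x ++ inr a :: Y = map inl x' ++ inr a' :: Y' -> [/\ x = x', a = a' & Y = Y'].
Proof.
elim: x x' => [|b x IH] [|b' x'] //=; first by case=> -> ->.
by case=> -> /IH [-> -> ->].
Qed.

Lemma enc_inv (w : seq S) i x a y : i < size w ->
  enc w i = map inl x ++ inr a :: map inl y -> w = x ++ a :: y /\ i = size x.
Proof.
move=> /split_at [x' [a' [y' [-> <-]]]]. rewrite enc_split => /inl_cat_inj [-> -> E].
split => //. congr (_ ++ _ :: _).
have Hinj : injective (@inl S S) by move=> u v [].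
exact: (inj_map Hinj) E.
Qed.

Lemma enc_langP (P : seq S -> nat -> Prop) z :
  (forall w i, P w i -> i < size w) ->
  enc_lang P z <-> exists x a y, z = map inl x ++ inr a :: map inl y /\ P (x ++ a :: y) (size x).
Proof.
move=> HP; split.
  move=> [w [i [Pwi ->]]]. have [x [a [y [Ew Ei]]]] := split_at (HP _ _ Pwi).
  exists x, a, y; subst; split => //. exact: enc_split.
move=> [x [a [y [-> Pxy]]]]. exists (x ++ a :: y), (size x); split => //.
by rewrite enc_split.
Qed.

End Enc.

Lemma enc_lang_mk (S : Type) (P : seq S -> nat -> Prop) x a y :
  (forall w i, P w i -> i < size w) ->
  enc_lang P (map inl x ++ inr a :: map inl y) <-> P (x ++ a :: y) (size x).
Proof.
move=> HP; have E := @enc_langP S P (map inl x ++ inr a :: map inl y) HP.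
split; last by move=> H; apply/E; exists x, a, y.
move=> /E [x0 [a0 [y0 [Ez H]]]].
have [Ex Ea Ey] := inl_cat_inj Ez. subst a0.
have Hinj : injective (@inl S S) by move=> u v [].
by rewrite Ex (inj_map Hinj Ey).
Qed.

Lemma split_uniq (S : Type) (x x' : seq S) a a' y y' :
  x ++ a :: y = x' ++ a' :: y' -> size x = size x' -> [/\ x = x', a = a' & y = y'].
Proof.
elim: x x' => [|b x IH] [|b' x'] //=; first by case=> -> ->.
by case=> -> /IH H [/H [-> -> ->]].
Qed.

End M3.
Import M3.
Module M5.

Section Fun.
Variable S : finType.
Variable T : transducer S.
Hypothesis HTf : functional T.

Definition Acc (u : seq S) := exists o, accepts T u o.
Definition Reach (x : seq S) (p : tstate T) (a : seq S) := exists i0, tinit T i0 /\ run i0 x p a.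
Definition CoR (p : tstate T) (z : seq S) (b : seq S) := exists qf, tfinal T qf /\ run p z qf b.
Definition GoodS x z p a := Reach x p a /\ exists b, CoR p z b.
Definition Good x z a := exists p, GoodS x z p a.
Definition MinG x z a := Good x z a /\ forall g, Good x z g -> size a <= size g.
Definition Seg x (c : S) y v := exists a a', [/\ MinG x (c :: y) a, MinG (x ++ [:: c]) y a' & a' = a ++ v].

Lemma acc_of {x z p a b} : Reach x p a -> CoR p z b -> accepts T (x ++ z) (a ++ b).
Proof.
move=> [i0 [Hi Hr]] [qf [Hf Hr']]. exists i0, qf; split => //; split => //.
by apply/run_cat; exists p, a, b.
Qed.

Lemma good_pref {x z a} : Good x z a -> exists o b, accepts T (x ++ z) o /\ o = a ++ b.
Proof. by move=> [p [HR [b HC]]]; exists (a ++ b), b; split => //; apply: acc_of HR HC. Qed.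

Lemma good_cmp {x z a g} : Good x z a -> Good x z g -> size a <= size g -> exists e, g = a ++ e.
Proof.
move=> /good_pref [o [b [Ho Eo]]] /good_pref [o' [b' [Ho' Eo']]] Hs.
have E := HTf _ _ _ Ho Ho'. rewrite Eo Eo' in E. exact: prefix_cmp E Hs.
Qed.

Lemma MinG_uniq {x z a1 a2} : MinG x z a1 -> MinG x z a2 -> a1 = a2.
Proof.
move=> [G1 M1] [G2 M2].
have [e Ee] := good_cmp G1 G2 (M1 _ G2).
have : size a2 <= size a1 by apply: M2.
rewrite Ee size_cat -{2}[size a1]addn0 leq_add2l leqn0 size_eq0 => /eqP ->.
by rewrite cats0.
Qed.

Lemma MinG_ex {x z} : (exists a, Good x z a) -> exists a, MinG x z a.
Proof.
move=> [a Ha].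
have Hex : exists n, cb (exists g, Good x z g /\ size g = n) by exists (size a); apply/cbP; exists a.
case: (ex_minnP Hex) => m /cbP [g [Hg <-]] Hmin.
exists g; split => // g' Hg'. apply: Hmin; apply/cbP; by exists g'.
Qed.

Lemma delay {x x' z p q ap aq d ap' aq'} :
  GoodS x z p ap -> GoodS x z q aq -> ap = aq ++ d ->
  GoodS x' z p ap' -> GoodS x' z q aq' -> ap' = aq' ++ d.
Proof.
move=> [Rp [bp Cp]] [Rq [bq Cq]] Ed [Rp' _] [Rq' _].
have E1 := HTf _ _ _ (acc_of Rp Cp) (acc_of Rq Cq).
have E2 := HTf _ _ _ (acc_of Rp' Cp) (acc_of Rq' Cq).
move: E1; rewrite Ed -catA => /catIl E1.
by move: E2; rewrite -E1 catA => /catIr.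
Qed.

Lemma reach_tr {x x' p a} : trans_cong T x x' -> Reach x p a -> exists a', Reach x' p a'.
Proof.
move=> Hx [i0 [Hi Hr]]. have [a' Ha'] := (Hx i0 p).1 (ex_intro _ a Hr).
by exists a', i0.
Qed.

Lemma goodS_tr {x x' z p a} : trans_cong T x x' -> GoodS x z p a -> exists a', GoodS x' z p a'.
Proof.
move=> Hx [HR HC]. have [a' Ha'] := reach_tr Hx HR. by exists a'; split.
Qed.

Lemma MinG_tr {x x' z p a a'} : trans_cong T x x' ->
  MinG x z a -> GoodS x z p a -> GoodS x' z p a' -> MinG x' z a'.
Proof.
move=> Hx [Ga Ma] Gp Gp'. split; first by exists p.
move=> g [q Gq'].
have Hx' : trans_cong T x' x by move=> p1 q1; split => /(Hx p1 q1).
have [g0 Gq] := goodS_tr Hx' Gq'.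
have [d Ed] := good_cmp Ga (ex_intro _ q Gq) (Ma _ (ex_intro _ q Gq)).
by rewrite (delay Gq Gp Ed Gq' Gp') size_cat leq_addr.
Qed.

Lemma good_right {x z z' a} : trans_cong T z z' -> Good x z a -> Good x z' a.
Proof.
move=> Hz [p [HR [b [qf [Hf Hr]]]]].
have [b' Hb'] := (Hz p qf).1 (ex_intro _ b Hr).
by exists p; split => //; exists b', qf.
Qed.

Lemma MinG_right {x z z' a} : trans_cong T z z' -> MinG x z a -> MinG x z' a.
Proof.
move=> Hz [Ga Ma]; split; first exact: good_right Hz Ga.
have Hz' : trans_cong T z' z by move=> p1 q1; split => /(Hz p1 q1).
by move=> g /(good_right Hz'); apply: Ma.
Qed.

Lemma tc_cons {a z z'} : trans_cong T z z' -> trans_cong T (a :: z) (a :: z').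
Proof.
move=> H. have [_ _ _ Hc _] := trans_cong_fi T.
by have := Hc _ _ [:: a] [::] H; rewrite !cats0.
Qed.

Lemma tc_rcons {a z z'} : trans_cong T z z' -> trans_cong T (z ++ [:: a]) (z' ++ [:: a]).
Proof.
move=> H. have [_ _ _ Hc _] := trans_cong_fi T.
by have := Hc _ _ [::] [:: a] H.
Qed.

Lemma Seg_right {x c y y' v} : trans_cong T y y' -> Seg x c y v -> Seg x c y' v.
Proof.
move=> Hy [a [a' [M1 M2 E]]]. exists a, a'; split => //.
  exact: MinG_right (tc_cons Hy) M1.
exact: MinG_right Hy M2.
Qed.

Lemma Seg_left {x x' c y v} : trans_cong T x x' -> Seg x c y v -> Seg x' c y v.
Proof.
move=> Hx [a [a' [M1 M2 E]]].
have [[ps Gs] _] := M1.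
have [[qs [[i0 [Hi Hr]] HC]] _] := M2.
move: Hr => /run_cat [p [a1 [o1 [Hr1 [Hr2 Ea']]]]].
have Gp : GoodS x (c :: y) p a1.
  split; first by exists i0.
  case: HC => b [qf [Hf Hrf]]. exists (o1 ++ b), qf; split => //.
  move: Hr2 => /= [r [o2 [o3 [Ht [[Er Eo3] Eo1]]]]]. subst r o3 o1.
  by exists qs, o2, b; rewrite cats0.
have [d Ed] := good_cmp M1.1 (ex_intro _ p Gp) (M1.2 _ (ex_intro _ p Gp)).
have Ev : v = d ++ o1 by apply: (@catIl _ a); rewrite -E Ea' Ed catA.
have [as' Gs'] := goodS_tr Hx Gs.
have [a1' Gp'] := goodS_tr Hx Gp.
have Ed' := delay Gp Gs Ed Gp' Gs'.
have M1' := MinG_tr Hx M1 Gs Gs'.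
have Gq' : GoodS (x' ++ [:: c]) y qs (a1' ++ o1).
  split; last exact: HC.
  move: Gp' => [[i1 [Hi1 Hr1']] _]. exists i1; split => //.
  by apply/run_cat; exists p, a1', o1.
have Gq : GoodS (x ++ [:: c]) y qs a'.
  split => //; exists i0; split => //. by apply/run_cat; exists p, a1, o1.
have M2' := MinG_tr (tc_rcons Hx) M2 Gq Gq'.
exists as', (a1' ++ o1); split => //.
by rewrite Ed' Ev catA.
Qed.

Lemma Seg_uniq {x c y v1 v2} : Seg x c y v1 -> Seg x c y v2 -> v1 = v2.
Proof.
move=> [a [a' [M1 M2 E]]] [b [b' [N1 N2 E']]].
move: E'; rewrite -(MinG_uniq M1 N1) -(MinG_uniq M2 N2) E. exact: catIl.
Qed.

Lemma Seg_ex {x c y} : Acc (x ++ c :: y) -> exists v, Seg x c y v.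
Proof.
move=> [o [i0 [qf [Hi [Hf Hr]]]]].
have Hr' := Hr. move: Hr' => /run_cat [p [o1 [o2 [R1 [R2 _]]]]].
have [a Ma] : exists a, MinG x (c :: y) a.
  by apply: MinG_ex; exists o1, p; split; [exists i0|exists o2, qf].
move: Hr; rewrite -cat1s catA => /run_cat [q [o1' [o2' [R1' [R2' _]]]]].
have [a' Ma'] : exists a', MinG (x ++ [:: c]) y a'.
  by apply: MinG_ex; exists o1', q; split; [exists i0|exists o2', qf].
have [[q' [[i1 [Hi1 Hrq]] HC]] _] := Ma'.
move: Hrq => /run_cat [p' [a1 [o3 [Hp' [Ht Ea']]]]].
have Gp : Good x (c :: y) a1.
  exists p'; split; first by exists i1.
  case: HC => b [qf' [Hf' Hrf]]. exists (o3 ++ b), qf'; split => //.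
  by rewrite -cat1s; apply/run_cat; exists q', o3, b.
have Hs : size a <= size a'.
  apply: leq_trans (Ma.2 _ Gp) _. by rewrite Ea' size_cat leq_addr.
have [o1'' [b1 [Ho1 Eo1]]] := good_pref Ma.1.
have [o2'' [b2 [Ho2 Eo2]]] := good_pref Ma'.1.
rewrite -catA /= in Ho2.
have E := HTf _ _ _ Ho1 Ho2. rewrite Eo1 Eo2 in E.
have [e Ee] := prefix_cmp E Hs.
by exists e, a, a'; split.
Qed.


Definition Qv (v w : seq S) (i : nat) := w <> [::] /\ i < size w /\ Acc w /\
  exists x c y, [/\ w = x ++ c :: y, size x = i & Seg x c y v].

Lemma size_ne {x : seq S} {c y} : x ++ c :: y <> [::].
Proof. by case: x. Qed.
Lemma size_lt (x : seq S) c y : size x < size (x ++ c :: y).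
Proof. by rewrite size_cat /= addnS ltnS leq_addr. Qed.

Lemma Qv_mk {v x c y} : Qv v (x ++ c :: y) (size x) <-> Acc (x ++ c :: y) /\ Seg x c y v.
Proof.
split.
  move=> [_ [_ [HA [x' [c' [y' [E Es HS]]]]]]].
  have [Ex Ec Ey] := split_uniq E (esym Es). by subst.
move=> [HA HS]; split; first exact: size_ne.
by split; [exact: size_lt|split => //; exists x, c, y].
Qed.

Lemma Qv_uniq {v1 v2 w i} : Qv v1 w i -> Qv v2 w i -> v1 = v2.
Proof.
move=> [_ [_ [_ [x [c [y [E Es HS]]]]]]] [_ [_ [_ [x' [c' [y' [E' Es' HS']]]]]]].
have [Ex Ec Ey] := split_uniq (etrans (esym E) E') (etrans Es (esym Es')).
subst. exact: Seg_uniq HS HS'.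
Qed.

Lemma Qv_ex {w i} : Acc w -> i < size w -> exists v, Qv v w i.
Proof.
move=> HA /split_at [x [c [y [E Es]]]]. subst.
have [v Hv] := Seg_ex HA. by exists v; apply/Qv_mk.
Qed.

Lemma Acc_tr {u u'} : trans_cong T u u' -> Acc u -> Acc u'.
Proof.
move=> H [o [i0 [qf [Hi [Hf Hr]]]]].
have [o' Ho'] := (H i0 qf).1 (ex_intro _ o Hr).
by exists o', i0, qf.
Qed.

Lemma tc_sym {u u'} : trans_cong T u u' -> trans_cong T u' u.
Proof. by move=> H p q; split => /(H p q). Qed.

Lemma Qv_inv {v x x' c y y'} : trans_cong T x x' -> trans_cong T y y' ->
  Qv v (x ++ c :: y) (size x) -> Qv v (x' ++ c :: y') (size x').
Proof.
move=> Hx Hy /Qv_mk [HA HS]. apply/Qv_mk; split.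
  apply: Acc_tr HA. exact: (cong_cat (trans_cong_fi T) Hx (tc_cons Hy)).
apply: Seg_right Hy _. exact: Seg_left Hx HS.
Qed.

Lemma chain {w o} : accepts T w o ->
  exists vs, [/\ size vs = size w, flatten vs = o & forall k, k < size w -> Qv (nth [::] vs k) w k].
Proof.
move=> Hacc.
have HA : Acc w by exists o.
have main : forall m, m <= size w -> exists vs, [/\ size vs = m,
    MinG (take m w) (drop m w) (flatten vs) & forall k, k < m -> Qv (nth [::] vs k) w k].
  elim=> [|m IH] Hm.
    exists [::]; split => //; rewrite take0 drop0.
    case: Hacc => [i0 [qf [Hi [Hf Hr]]]].
    split; last by [].
    exists i0; split; first by exists i0.
    by exists o, qf.
  have [vs [Hs HM Hk]] := IH (ltnW Hm).
  have [x [c [y [Ew Ex]]]] := split_at Hm.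
  have [v [a [a' [M1 M2 E]]]] : exists v, Seg x c y v by apply: Seg_ex; rewrite -Ew.
  have Ht : take m w = x by rewrite Ew -Ex take_size_cat.
  have Hd : drop m w = c :: y by rewrite Ew -Ex drop_size_cat.
  rewrite Ht Hd in HM. have Ea := MinG_uniq HM M1.
  exists (rcons vs v); split.
  - by rewrite size_rcons Hs.
  - have -> : take m.+1 w = x ++ [:: c].
      by rewrite Ew -Ex -cat1s catA take_size_cat // size_cat addn1.
    have -> : drop m.+1 w = y.
      by rewrite Ew -Ex -cat1s catA drop_size_cat // size_cat addn1.
    by rewrite flatten_rcons Ea -E.
  - move=> k Hk1. rewrite nth_rcons Hs. case: ltnP => Hkm; first exact: Hk.
    have -> : k = m by apply/eqP; rewrite eqn_leq Hkm andbT -ltnS.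
    rewrite eqxx Ew -Ex. apply/Qv_mk; split; [by rewrite -Ew|by exists a, a'].
have [vs [Hs HM Hk]] := main _ (leqnn _).
rewrite take_size drop_size in HM.
exists vs; split => //.
case: HM => [[p [[i0 [Hi Hr]] [b [qf [Hf [Ep Eb]]]]]] _].
subst; apply: HTf _ _ _ _ Hacc. by exists i0, qf.
Qed.

End Fun.

End M5.
Import M5.
Module M2.


Section VF.
Variable V : congclass.
Variable F : fragment.
Hypothesis HV : is_cong_class V.
Hypothesis Hchar : forall (S : finType) (L : seq S -> Prop),
     Fdef F L <-> exists r, V S r /\ recognizes r L.
Hypothesis H2 : forall (S S' : finType) (h : S -> S'), injective h ->
     forall L : seq S -> Prop,
       Fdef F L <-> Fdef F (fun u' : seq S' => exists2 u, L u & u' = map h u).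
Hypothesis H4 : forall S : finType, Fdef F (fun u : seq S => u = [::]).

Lemma Vfi {S : finType} {r} : V S r -> is_fi_cong r.
Proof. by case: (HV S) => H _ _; apply: H. Qed.

Lemma Vne {S : finType} : exists r, V S r.
Proof. by have [r [Hr _]] := (Hchar _ _).1 (H4 S); exists r. Qed.

Lemma Vseq {S : finType} (I : eqType) (R : I -> seq S -> seq S -> Prop) (s : seq I) :
  (forall i, V S (R i)) ->
  exists r, V S r /\ forall u v, r u v -> forall i, i \in s -> R i u v.
Proof.
move=> HR; elim: s => [|i s [r [Hr Hs]]].
  by have [r Hr] := @Vne S; exists r; split.
have [_ HI _] := HV S.
exists (fun u v => R i u v /\ r u v); split; first exact: HI.
move=> u v [H1 H2'] j; rewrite inE => /orP [/eqP Ej|Hj]; [by rewrite Ej|exact: Hs].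
Qed.

Lemma Vfam {S : finType} (I : finType) (R : I -> seq S -> seq S -> Prop) :
  (forall i, V S (R i)) ->
  exists r, V S r /\ forall u v, r u v -> forall i, R i u v.
Proof.
move=> HR; have [r [Hr Hs]] := @Vseq S I R (enum I) HR.
by exists r; split => // u v H i; apply: (Hs u v H i); rewrite mem_enum.
Qed.

Lemma Fdef_ext {S : finType} {L1 L2 : seq S -> Prop} :
  (forall u, L1 u <-> L2 u) -> Fdef F L1 -> Fdef F L2.
Proof. by move=> E [phi [Hp H]]; exists phi; split => // w; rewrite -E. Qed.

Lemma Fdef_rec {S : finType} {r} {L : seq S -> Prop} : V S r -> recognizes r L -> Fdef F L.
Proof. by move=> Hr HL; apply/Hchar; exists r. Qed.

Lemma Fdef_cong {S : finType} (L : seq S -> Prop) :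
  Fdef F L -> exists r, V S r /\ recognizes r L.
Proof. by move/Hchar. Qed.

Lemma Fdef_union {S : finType} (I : finType) (P : I -> Prop) (L : I -> seq S -> Prop) :
  (forall i, Fdef F (L i)) -> Fdef F (fun z => exists i, P i /\ L i z).
Proof.
move=> HL.
pose R i := proj1_sig (constructive_indefinite_description _ ((Hchar _ _).1 (HL i))).
have HR i : V S (R i) /\ recognizes (R i) (L i).
  by rewrite /R; case: constructive_indefinite_description.
have [r [Hr Hs]] := @Vfam S I R (fun i => (HR i).1).
apply: (Fdef_rec Hr) => u v Huv.
split=> [[i [Pi Li]]|[i [Pi Li]]]; exists i; split => //; by apply/((HR i).2 u v (Hs _ _ Huv i)).
Qed.

Lemma Fdef_inter {S : finType} {L1 L2 : seq S -> Prop} :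
  Fdef F L1 -> Fdef F L2 -> Fdef F (fun z => L1 z /\ L2 z).
Proof.
move=> /Hchar [r1 [Hr1 R1]] /Hchar [r2 [Hr2 R2]].
have [_ HI _] := HV S.
apply: (Fdef_rec (HI _ _ Hr1 Hr2)) => u v [Huv1 Huv2].
by rewrite (R1 _ _ Huv1) (R2 _ _ Huv2).
Qed.

Lemma Fdef_all {S : finType} : Fdef F (fun _ : seq S => True).
Proof. by have [r Hr] := @Vne S; apply: (Fdef_rec Hr). Qed.

Lemma Fdef_class {S : finType} r (w0 : seq S) : V S r -> Fdef F (fun u => r u w0).
Proof.
move=> Hr; apply: (Fdef_rec Hr) => u v Huv.
have [_ Hsym Htr _ _] := Vfi Hr.
split=> H; [apply: Htr H; exact: Hsym| exact: Htr H].
Qed.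

Lemma Fdef_preimage {S S' : finType} (h : S -> S') (L : seq S' -> Prop) :
  injective h -> Fdef F L -> Fdef F (fun u => L (map h u)).
Proof.
move=> Hh HL; apply/(H2 _ _ h Hh).
have Himg := (H2 _ _ h Hh (fun _ => True)).1 (@Fdef_all S).
apply: Fdef_ext (Fdef_inter HL Himg) => u'; split.
  by move=> [Lu [u _ E]]; exists u => //; rewrite -E.
by move=> [u Lu ->]; split => //; exists u.
Qed.


Hypothesis H3 : forall (S : finType) (L1 L2 : seq S -> Prop),
     Fdef F L1 -> Fdef F L2 -> Fdef F (sharp_lang L1 L2).

Lemma Fdef_marked {S : finType} (L1 L2 : seq S -> Prop) (a : S) :
  Fdef F L1 -> Fdef F L2 ->
  Fdef F (fun z : seq (S + S) => exists x y, L1 x /\ L2 y /\ z = map inl x ++ inr a :: map inl y).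
Proof.
move=> HL1 HL2.
pose h (o : option S) : S + S := if o is Some b then inl b else inr a.
have Hh : injective h by move=> [b|] [b'|] //= [->].
have := (H2 _ _ h Hh _).1 (H3 _ _ _ HL1 HL2).
apply: Fdef_ext => z; split.
  move=> [u [u1 [u2 [H1 [H2' ->]]]] ->]. exists u1, u2; split => //; split => //.
  by rewrite map_cat /= -!map_comp.
move=> [x [y [H1 [H2' ->]]]]. exists (map Some x ++ None :: map Some y).
  by exists x, y.
by rewrite map_cat /= -!map_comp.
Qed.

Lemma V_restrict {S : finType} r : V (S + S)%type r ->
  exists r', V S r' /\ forall u v, r' u v -> r (map inl u) (map inl v).
Proof.
move=> Hr. have [_ Hsym Htr _ [n [rep Hrep]]] := Vfi Hr.
have Hinj : injective (@inl S S) by move=> u v [].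
have HL k : Fdef F (fun u : seq S => r (map inl u) (rep k)).
  exact: (@Fdef_preimage S (S + S)%type inl (fun z => r z (rep k)) Hinj (@Fdef_class _ r (rep k) Hr)).
pose R k := proj1_sig (constructive_indefinite_description _ ((Hchar _ _).1 (HL k))).
have HR k : V S (R k) /\ recognizes (R k) (fun u : seq S => r (map inl u) (rep k)).
  by rewrite /R; case: constructive_indefinite_description.
have [r' [Hr' Hs]] := @Vfam S _ R (fun k => (HR k).1).
exists r'; split => // u v Huv.
have [k Hk] := Hrep (map inl u).
have Hv : r (map inl v) (rep k) by apply/((HR k).2 u v (Hs _ _ Huv k)).
by apply: Htr Hk _; apply: Hsym.
Qed.


Hypothesis H1 : forall (S : finType) (P : seq S -> nat -> Prop),
     (forall w i, P w i -> w <> [::] /\ i < size w) ->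
     ((exists psi : form S, Fcsent F psi /\
         forall w i, w <> [::] -> i < size w -> (P w i <-> psat w i psi))
      <-> Fdef F (enc_lang P)).

Section Back.
Variable S : finType.
Variable f : seq S -> option (seq S).
Variable T : Ftransducer S.
Hypothesis HTv : Ftrans_valid F T.
Hypothesis HTd : Ftrans_defines T f.

Definition Dom (u : seq S) := sat u (fdom T).
Definition Pv (v : seq S) (w : seq S) (i : nat) := w <> [::] /\ i < size w /\ psat w i (fpsi T v).

Lemma Pv_size v w i : Pv v w i -> w <> [::] /\ i < size w.
Proof. by case=> [? []]. Qed.

Lemma Pv_inv v : v \in fK T -> exists r, V S r /\ forall x x' y y' a, r x x' -> r y y' ->
   (Pv v (x ++ a :: y) (size x) <-> Pv v (x' ++ a :: y') (size x')).
Proof.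
move=> Hv. have HE : Fdef F (enc_lang (Pv v)).
  apply/(H1 _ _ (@Pv_size v)). exists (fpsi T v); split; first exact: (HTv.2 v Hv).
  by move=> w i Hw Hi; rewrite /Pv; split => [[_ []]|].
have [r [Hr Hrec]] := (Hchar _ _).1 HE.
have [r' [Hr' Hres]] := V_restrict _ Hr.
exists r'; split => // x x' y y' a Hx Hy.
have HPs w i : Pv v w i -> i < size w by move=> /Pv_size [].
rewrite -!(@enc_lang_mk S (Pv v) _ _ _ HPs).
apply: Hrec. apply: cong_cat; first exact: Vfi Hr.
  exact: Hres.
have [Hrefl _ _ _ _] := Vfi Hr.
by apply: (@cong_cat _ _ [:: inr a] [:: inr a]); [exact: Vfi Hr|exact: Hrefl|exact: Hres].
Qed.

Lemma exists_r0 : exists r0, [/\ V S r0,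
  (forall u v, r0 u v -> (Dom u <-> Dom v)),
  (forall u v, r0 u v -> (u = [::] <-> v = [::])) &
  (forall v, v \in fK T -> forall x x' y y' a, r0 x x' -> r0 y y' ->
     (Pv v (x ++ a :: y) (size x) <-> Pv v (x' ++ a :: y') (size x')))].
Proof.
have HR v : exists r, V S r /\ (v \in fK T -> forall x x' y y' a, r x x' -> r y y' ->
   (Pv v (x ++ a :: y) (size x) <-> Pv v (x' ++ a :: y') (size x'))).
  case: (boolP (v \in fK T)) => Hv.
    by have [r [Hr H]] := Pv_inv _ Hv; exists r; split.
  by have [r Hr] := @Vne S; exists r; split.
pose R v := proj1_sig (constructive_indefinite_description _ (HR v)).
have HRv v : V S (R v) /\ (v \in fK T -> forall x x' y y' a, R v x x' -> R v y y' ->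
   (Pv v (x ++ a :: y) (size x) <-> Pv v (x' ++ a :: y') (size x'))).
  by rewrite /R; case: constructive_indefinite_description.
have [r1 [Hr1 Hs1]] := @Vseq S _ R (fK T) (fun v => (HRv v).1).
have HD : Fdef F Dom by exists (fdom T); split => //; exact: HTv.1.
have [rd [Hrd Recd]] := (Hchar _ _).1 HD.
have [re [Hre Rece]] := (Hchar _ _).1 (H4 S).
have [_ HI _] := HV S.
exists (fun u v => r1 u v /\ (rd u v /\ re u v)); split.
- by apply: (HI) => //; apply: (HI).
- by move=> u v [_ [H _]]; apply: Recd.
- by move=> u v [_ [_ H]]; apply: Rece.
- move=> v Hv x x' y y' a [Hx _] [Hy _].
  by apply: (HRv v).2 => //; apply: Hs1.
Qed.


Section Trans.
Variable r0 : seq S -> seq S -> Prop.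
Hypothesis Hr0 : V S r0.
Hypothesis Hdom : forall u v, r0 u v -> (Dom u <-> Dom v).
Hypothesis Heps : forall u v, r0 u v -> (u = [::] <-> v = [::]).
Hypothesis Hinv : forall v, v \in fK T -> forall x x' y y' a, r0 x x' -> r0 y y' ->
     (Pv v (x ++ a :: y) (size x) <-> Pv v (x' ++ a :: y') (size x')).

Definition fi0 := Vfi Hr0.
Definition idx0 : exists n (rep : 'I_n -> seq S), forall u, exists k, r0 u (rep k) :=
  match fi0 with And5 _ _ _ _ h => h end.
Definition nn := proj1_sig (constructive_indefinite_description _ idx0).
Definition rep0 : 'I_nn -> seq S :=
  proj1_sig (constructive_indefinite_description _
    (proj2_sig (constructive_indefinite_description _ idx0))).
Lemma rep0P u : exists k, r0 u (rep0 k).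
Proof.
exact: (proj2_sig (constructive_indefinite_description _
    (proj2_sig (constructive_indefinite_description _ idx0)))).
Qed.
Definition cls (u : seq S) : 'I_nn := proj1_sig (constructive_indefinite_description _ (rep0P u)).
Lemma clsP u : r0 u (rep0 (cls u)).
Proof. by rewrite /cls; case: constructive_indefinite_description. Qed.

Lemma r0_refl u : r0 u u. Proof. by case: fi0. Qed.
Lemma r0_sym {u v} : r0 u v -> r0 v u. Proof. by case: fi0 => _ H _ _ _; apply: H. Qed.
Lemma r0_trans {u v w} : r0 u v -> r0 v w -> r0 u w.
Proof. by case: fi0 => _ _ H _ _; apply: H. Qed.
Lemma r0_cat {x x' y y'} : r0 x x' -> r0 y y' -> r0 (x ++ y) (x' ++ y').
Proof. by apply: cong_cat; exact: fi0. Qed.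

Definition St : finType := ('I_nn * 'I_nn)%type.

Definition omega (i : 'I_nn) (a : S) (j : 'I_nn) : seq S :=
  match excluded_middle_informative
     (exists v, v \in fK T /\ Pv v (rep0 i ++ a :: rep0 j) (size (rep0 i))) with
  | left H => proj1_sig (constructive_indefinite_description _ H)
  | right _ => [::] end.

Lemma omegaP i a j : (exists v, v \in fK T /\ Pv v (rep0 i ++ a :: rep0 j) (size (rep0 i))) ->
  omega i a j \in fK T /\ Pv (omega i a j) (rep0 i ++ a :: rep0 j) (size (rep0 i)).
Proof.
rewrite /omega; case: excluded_middle_informative => // H _.
by case: constructive_indefinite_description.
Qed.

Definition tr (p : St) (a : S) (q : St) : Prop :=
  r0 (rep0 p.1 ++ [:: a]) (rep0 q.1) /\ r0 (a :: rep0 q.2) (rep0 p.2).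

Definition trs : seq (St * S * seq S * St) :=
  [seq (x.1.1, x.1.2, omega x.1.1.1 x.1.2 x.2.2, x.2) |
     x <- enum {: (St * S) * St} & cb (tr x.1.1 x.1.2 x.2)].

Lemma trsP p a o q : (p, a, o, q) \in trs <-> tr p a q /\ o = omega p.1 a q.2.
Proof.
split.
  move=> /mapP [[[p' a'] q']]; rewrite mem_filter => /andP [/cbP Htr _] [-> -> -> ->].
  by split.
move=> [Htr ->]. apply/mapP; exists (p, a, q) => //.
by rewrite mem_filter mem_enum andbT; apply/cbP.
Qed.

Definition TT : transducer S :=
  @Transducer S St trs (fun p => cb (r0 (rep0 p.1) [::] /\ Dom (rep0 p.2)))
     (fun q => cb (r0 (rep0 q.2) [::])).


Lemma run_sound {p q : tstate TT} {u o} : run p u q o ->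
  r0 (rep0 p.1 ++ u) (rep0 q.1) /\ r0 (u ++ rep0 q.2) (rep0 p.2).
Proof.
elim: u p o => [|a u IH] p o /=.
  by move=> [-> _]; rewrite cats0; split; apply: r0_refl.
move=> [r [o1 [o2 [/trsP [[Ht1 Ht2] _] [/IH [IH1 IH2] _]]]]].
split.
  apply: r0_trans IH1. rewrite -cat1s catA. apply: r0_cat => //; exact: r0_refl.
apply: r0_trans Ht2. rewrite -cat1s -[a :: rep0 r.2]cat1s.
by apply: r0_cat => //; exact: r0_refl.
Qed.

Lemma run_complete u (p q : tstate TT) : u <> [::] ->
  r0 (rep0 p.1 ++ u) (rep0 q.1) -> r0 (u ++ rep0 q.2) (rep0 p.2) -> exists o, run p u q o.
Proof.
elim: u p => [//|a u IH] p _ A1 A2.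
case: u IH A1 A2 => [|b u] IH A1 A2.
  exists (omega p.1 a q.2) => /=; exists q, (omega p.1 a q.2), [::].
  by rewrite cats0; split => //; apply/trsP.
pose r : tstate TT := (cls (rep0 p.1 ++ [:: a]), cls ((b :: u) ++ rep0 q.2)).
have Htr : tr p a r.
  split; first exact: clsP.
  apply: r0_trans A2. change (r0 ([:: a] ++ rep0 r.2) ([:: a] ++ ((b :: u) ++ rep0 q.2))).
  apply: r0_cat; first exact: r0_refl. apply: r0_sym; exact: clsP.
have [o Ho] : exists o, run r (b :: u) q o.
  apply: IH => //.
    apply: r0_trans A1. apply: (@r0_trans _ ((rep0 p.1 ++ [:: a]) ++ b :: u)).
      apply: r0_cat; [apply: r0_sym; exact: clsP|exact: r0_refl].
    by rewrite -catA; exact: r0_refl.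
  exact: clsP.
exists (omega p.1 a r.2 ++ o) => /=; exists r, (omega p.1 a r.2), o.
by split => //; apply/trsP.
Qed.

Lemma trans_cong_TT u v : r0 u v -> trans_cong TT u v.
Proof.
move=> Huv p q.
have [Eu|Nu] := eqVneq u [::].
  have Ev : v = [::] by apply: (proj1 (Heps _ _ Huv)).
  by rewrite Eu Ev.
have Nv : v <> [::] by move=> Ev; move: Nu; rewrite ((Heps _ _ Huv).2 Ev) eqxx.
have Nu' : u <> [::] by apply/eqP.
split=> [[o /run_sound [R1 R2]]|[o /run_sound [R1 R2]]]; apply: run_complete => //.
- apply: r0_trans R1; apply: r0_cat; [exact: r0_refl|exact: r0_sym].
- apply: r0_trans R2; apply: r0_cat; [exact: r0_sym|exact: r0_refl].
- apply: r0_trans R1; apply: r0_cat; [exact: r0_refl|exact: Huv].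
- apply: r0_trans R2; apply: r0_cat; [exact: Huv|exact: r0_refl].
Qed.

Lemma V_TT : V S (trans_cong TT).
Proof.
have [_ _ Hup] := HV S. apply: (Hup r0) => //; first exact: trans_cong_fi.
exact: trans_cong_TT.
Qed.

Lemma run_out {u} {p q : tstate TT} {o x y} : run p u q o ->
  r0 (rep0 p.1) x -> r0 (rep0 q.2) y -> Dom (x ++ u ++ y) ->
  exists vs, [/\ size vs = size u, o = flatten vs & forall k, k < size u ->
    nth [::] vs k \in fK T /\ psat (x ++ u ++ y) (size x + k) (fpsi T (nth [::] vs k))].
Proof.
elim: u p o x => [|a u IH] p o x /=.
  by move=> [_ ->] _ _ _; exists [::].
move=> [r [o1 [o2 [/trsP [[Ht1 Ht2] Eo1] [Hr ->]]]]] Hx Hy HD.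
have Hx' : r0 (rep0 r.1) (x ++ [:: a]).
  apply: r0_trans (r0_sym Ht1) _. apply: r0_cat => //; exact: r0_refl.
have HD' : Dom ((x ++ [:: a]) ++ u ++ y) by rewrite -catA.
have [vs' [Hs' Eo2 Hvs']] := IH r o2 _ Hr Hx' Hy HD'.
have [_ Hsuf] := run_sound Hr.
have Huy : r0 (u ++ y) (rep0 r.2).
  apply: r0_trans Hsuf. apply: r0_cat; [exact: r0_refl|exact: r0_sym].
set w := x ++ a :: u ++ y.
have Nw : w <> [::] by rewrite /w => /(congr1 size); rewrite size_cat /= addnS.
have Hsw : size x < size w by rewrite /w size_cat /= addnS ltnS leq_addr.
have [Hex _] := HTd _ Nw.
have [v0 [[Hv0K Hv0] _]] := Hex HD (size x) Hsw.
have P0 : Pv v0 (rep0 p.1 ++ a :: rep0 r.2) (size (rep0 p.1)).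
  apply/(Hinv _ Hv0K _ _ _ _ _ (r0_sym Hx) Huy). by split.
have [HoK HoP] := omegaP _ _ _ (ex_intro _ v0 (conj Hv0K P0)).
have HoP' : Pv (omega p.1 a r.2) w (size x).
  by apply/(Hinv _ HoK _ _ _ _ _ Hx (r0_sym Huy)).
exists (o1 :: vs'); split => //=; first by rewrite Hs'.
  by rewrite Eo2 Eo1.
move=> [|k] Hk /=.
  by rewrite addn0 Eo1; split => //; case: HoP' => _ [].
have [A1' A2'] := Hvs' k Hk. split => //.
by move: A2'; rewrite -catA size_cat /= addn1 addSnnS.
Qed.

Lemma vs_uniq {w vs1 vs2} : w <> [::] -> Dom w ->
  size vs1 = size w -> size vs2 = size w ->
  (forall k, k < size w -> nth [::] vs1 k \in fK T /\ psat w k (fpsi T (nth [::] vs1 k))) ->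
  (forall k, k < size w -> nth [::] vs2 k \in fK T /\ psat w k (fpsi T (nth [::] vs2 k))) ->
  vs1 = vs2.
Proof.
move=> Nw HD Hs1 Hs2 A1 A2. apply: (eq_from_nth (x0 := [::])); first by rewrite Hs1.
move=> k; rewrite Hs1 => Hk.
have [v [_ Hu]] := (HTd _ Nw).1 HD k Hk.
by rewrite -(Hu _ (A1 k Hk)) -(Hu _ (A2 k Hk)).
Qed.

Lemma back_TT : [/\ functional TT, realizes TT f & V S (trans_cong TT)].
Proof.
have acc_out u o : u <> [::] -> accepts TT u o -> Dom u /\ exists vs, [/\ size vs = size u,
    o = flatten vs & forall k, k < size u ->
    nth [::] vs k \in fK T /\ psat u k (fpsi T (nth [::] vs k))].
  move=> Nu [p [q [/cbP [Hp HDp] [/cbP Hq Hrun]]]].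
  have [_ Hsuf] := run_sound Hrun.
  have Hr : r0 u (rep0 p.2).
    apply: r0_trans Hsuf.
    rewrite -{1}[u]cats0; apply: r0_cat; [exact: r0_refl|exact: r0_sym].
  have HD : Dom u by apply/(Hdom _ _ Hr).
  split; first exact: HD.
  have HDu : Dom ([::] ++ u ++ [::]) by rewrite /= cats0.
  have [vs [A1 A2 A3]] := run_out Hrun Hp Hq HDu.
  exists vs; split => // k Hk; have := A3 k Hk; by rewrite /= cats0 add0n.
split.
- move=> u o1 o2. have [->|Nu] := eqVneq u [::].
    by move=> [p [q [_ [_ [_ ->]]]]] [p' [q' [_ [_ [_ ->]]]]].
  move/eqP: Nu => Nu.
  move=> /(acc_out _ _ Nu) [HD [vs1 [Hs1 -> A1]]] /(acc_out _ _ Nu) [_ [vs2 [Hs2 -> A2]]].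
  by rewrite (vs_uniq Nu HD Hs1 Hs2 A1 A2).
- move=> u Nu o. rewrite ((HTd _ Nu).2 o). split.
    move=> [HD [vs [Hs Eo Hvs]]].
    pose p0 : tstate TT := (cls [::], cls u).
    pose q0 : tstate TT := (cls u, cls [::]).
    have [o' Hrun] : exists o', run p0 u q0 o'.
      apply: run_complete => //=.
        apply: (@r0_trans _ u); last exact: clsP.
        rewrite -{2}[u]cat0s; apply: r0_cat; [apply: r0_sym; exact: clsP|exact: r0_refl].
      apply: (@r0_trans _ u); last exact: clsP.
      rewrite -{2}[u]cats0; apply: r0_cat; [exact: r0_refl|apply: r0_sym; exact: clsP].
    have Hacc : accepts TT u o'.
      exists p0, q0; split; last split => //.
        by apply/cbP; split; [apply: r0_sym; exact: clsP|apply/(Hdom _ _ (clsP u))].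
      by apply/cbP; apply: r0_sym; exact: clsP.
    have [_ [vs' [Hs' Eo' Hvs']]] := acc_out _ _ Nu Hacc.
    by rewrite Eo (vs_uniq Nu HD Hs Hs' Hvs Hvs') -Eo'.
  move=> Hacc. exact: acc_out _ _ Nu Hacc.
- exact: V_TT.
Qed.
End Trans.

Lemma back : V_rational V f.
Proof.
have [r0 [Hr0 Hd He Hi]] := exists_r0.
by have [A1' A2' A3'] := back_TT _ Hr0 Hd He Hi; exists (TT _ Hr0).
Qed.
End Back.

Section Fwd.
Variable S : finType.
Variable f : seq S -> option (seq S).
Variable T : transducer S.
Hypothesis HTf : functional T.
Hypothesis HTr : realizes T f.
Hypothesis HTV : V S (trans_cong T).

Definition idxT : exists n (rep : 'I_n -> seq S), forall u, exists k, trans_cong T u (rep k) :=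
  match Vfi HTV with And5 _ _ _ _ h => h end.
Definition nT := proj1_sig (constructive_indefinite_description _ idxT).
Definition repT : 'I_nT -> seq S :=
  proj1_sig (constructive_indefinite_description _
    (proj2_sig (constructive_indefinite_description _ idxT))).
Lemma repTP u : exists k, trans_cong T u (repT k).
Proof.
exact: (proj2_sig (constructive_indefinite_description _
    (proj2_sig (constructive_indefinite_description _ idxT)))).
Qed.

Lemma Qv_size v w i : Qv S T v w i -> i < size w.
Proof. by case=> [_ []]. Qed.

Lemma Fdef_encQ v : Fdef F (enc_lang (Qv S T v)).
Proof.
pose P (t : ('I_nT * S * 'I_nT)%type) :=
  Qv S T v (repT t.1.1 ++ t.1.2 :: repT t.2) (size (repT t.1.1)).
pose L (t : ('I_nT * S * 'I_nT)%type) (z : seq (S + S)) := exists x y,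
  trans_cong T x (repT t.1.1) /\ trans_cong T y (repT t.2) /\ z = map inl x ++ inr t.1.2 :: map inl y.
have HL t : Fdef F (L t).
  apply: Fdef_marked; apply: Fdef_class; exact: HTV.
apply: (Fdef_ext _ (@Fdef_union _ _ P L HL)) => z.
have HPs := @Qv_size v.
split.
  move=> [[[kx c] ky] [HP [x [y [Hx [Hy ->]]]]]].
  apply/(@enc_lang_mk S (Qv S T v) x c y HPs).
  exact: (Qv_inv S T HTf (tc_sym S T Hx) (tc_sym S T Hy) HP).
move=> /(@enc_langP S (Qv S T v) z HPs) [x [c [y [-> HQ]]]].
have [kx Hx] := repTP x. have [ky Hy] := repTP y.
exists (kx, c, ky); split; last by exists x, y.
exact: (Qv_inv S T HTf Hx Hy HQ).
Qed.

Lemma fwd : F_definable F f.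
Proof.
have HAcc : Fdef F (Acc S T).
  apply: (Fdef_rec HTV) => u v Huv.
  by split; apply: Acc_tr; [exact: Huv|exact: tc_sym].
case: HAcc => phi [Hphi Ephi].
have HPs v : forall w i, Qv S T v w i -> w <> [::] /\ i < size w by move=> w i [? []].
have Hpsi v : exists psi, Fcsent F psi /\ forall w i, w <> [::] -> i < size w ->
    (Qv S T v w i <-> psat w i psi).
  exact: (H1 _ _ (HPs v)).2 (Fdef_encQ v).
pose psi v := proj1_sig (constructive_indefinite_description _ (Hpsi v)).
have psiP v : Fcsent F (psi v) /\ forall w i, w <> [::] -> i < size w ->
    (Qv S T v w i <-> psat w i (psi v)).
  by rewrite /psi; case: constructive_indefinite_description.
pose segf (x : seq S) c y := match excluded_middle_informative (exists v, Seg S T x c y v) with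
  | left H => proj1_sig (constructive_indefinite_description _ H) | right _ => [::] end.
pose K := [seq segf (repT t.1.1) t.1.2 (repT t.2) | t <- enum {: 'I_nT * S * 'I_nT}].
have HinK w i v : Qv S T v w i -> v \in K.
  move=> [_ [_ [_ [x [c [y [Ew Ex HS]]]]]]].
  have [kx Hx] := repTP x. have [ky Hy] := repTP y.
  have HS' : Seg S T (repT kx) c (repT ky) v.
    exact: (Seg_right S T Hy (Seg_left S T HTf Hx HS)).
  have -> : v = segf (repT kx) c (repT ky).
    rewrite /segf; case: excluded_middle_informative => [H|[]]; last by exists v.
    case: constructive_indefinite_description => v' Hv' /=.
    exact: (Seg_uniq S T HTf HS' Hv').
  apply/mapP; exists (kx, c, ky) => //; by rewrite mem_enum.
exists (FTransducer K phi psi); split.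
  by split => //= v _; exact: (psiP v).1.
move=> u Nu /=. split.
  move=> /Ephi HA i Hi. have [v Hv] := Qv_ex S T HTf HA Hi.
  exists v; split; first by split; [exact: (HinK _ _ _ Hv)|apply/((psiP v).2 _ _ Nu Hi)].
  move=> v' [_ /((psiP v').2 _ _ Nu Hi) Hv']. exact: (Qv_uniq S T HTf Hv Hv').
move=> o; split.
  move=> Hf. have Hacc := (HTr u Nu o).1 Hf. split; first by apply/Ephi; exists o.
  have [vs [Hs Ef Hk]] := chain S T HTf Hacc. exists vs; split => // k Hk'.
  split; first exact: (HinK _ _ _ (Hk k Hk')).
  by apply/((psiP _).2 _ _ Nu Hk'); exact: Hk.
move=> [/Ephi [o' Hacc] [vs [Hs Eo Hk]]].
have [vs' [Hs' Ef' Hk']] := chain S T HTf Hacc.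
have Evs : vs = vs'.
  apply: (eq_from_nth (x0 := [::])); first by rewrite Hs Hs'.
  move=> k; rewrite Hs => Hk1. apply: (Qv_uniq S T HTf _ (Hk' k Hk1)).
  by apply/((psiP _).2 _ _ Nu Hk1); exact: (Hk k Hk1).2.
by apply/(HTr u Nu o).2; rewrite Eo Evs Ef'.
Qed.

End Fwd.
End VF.

End M2.
Import M2.

Theorem theorem6p10 (V : congclass) (F : fragment)
  (HV : is_cong_class V)
  (Hchar : forall (S : finType) (L : seq S -> Prop),
     Fdef F L <-> exists r, V S r /\ recognizes r L)
  (H1 : forall (S : finType) (P : seq S -> nat -> Prop),
     (forall w i, P w i -> w <> [::] /\ i < size w) ->
     ((exists psi : form S, Fcsent F psi /\
         forall w i, w <> [::] -> i < size w -> (P w i <-> psat w i psi))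
      <-> Fdef F (enc_lang P)))
  (H2 : forall (S S' : finType) (h : S -> S'), injective h ->
     forall L : seq S -> Prop,
       Fdef F L <-> Fdef F (fun u' : seq S' => exists2 u, L u & u' = map h u))
  (H3 : forall (S : finType) (L1 L2 : seq S -> Prop),
     Fdef F L1 -> Fdef F L2 -> Fdef F (sharp_lang L1 L2))
  (H4 : forall S : finType, Fdef F (fun u : seq S => u = [::]))
  (S : finType) (f : seq S -> option (seq S)) :
  V_rational V f <-> F_definable F f.
Proof.
split.
- move=> [T [HTf HTr HTV]].
  exact: (fwd V F HV Hchar H2 H4 H3 H1 S f T HTf HTr HTV).
- move=> [T [HTv HTd]].
  exact: (back V F HV Hchar H2 H4 H1 S f T HTv HTd).
Qed.
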